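(* Let $G$ be an undirected multigraph, $C\subseteq V(G)$ and $z\ge0$. If $G$ contains a $C$-certificate $H$ of order $z$, then $H$ contains (as a subgraph) a $C$-certificate $\hat H$ of order $z$ such that $\hat H-C$ has at most $\frac{|C|}{2}(z^2+2z-1)$ trees.
   Context: A feedback vertex set (FVS) of a multigraph $H$ is a set $X\subseteq V(H)$ with $H-X$ acyclic (self-loops and pairs of parallel edges count as cycles); $\mathrm{fvs}(H)$ is its minimum size. For $C\subseteq V(G)$, a $C$-certificate is a subgraph $H$ of $G$ such that $C$ is a minimum FVS of $H$; it has order $z$ if every connected component $H'$ of $H$ satisfies $\mathrm{fvs}(H')=|C\cap V(H')|\le z$. *)

(* Defs.v *)
(* A multigraph G is given by finite vertex/edge types and an
   endpoint map [ends : E -> V * V] (order of the pair is irrelevant: edges are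
   undirected). Self-loops (ends e = (v,v)) and parallel edges are allowed. *)
From mathcomp Require Import all_boot.
Set Implicit Arguments. Unset Strict Implicit. Unset Printing Implicit Defensive.

Section MultiGraph.
Variables (V E : finType) (ends : E -> V * V).

Definition joins (e : E) (x y : V) : bool :=
  (ends e == (x, y)) || (ends e == (y, x)).

Definition is_subgraph (W : {set V}) (F : {set E}) : bool :=
  [forall e in F, ((ends e).1 \in W) && ((ends e).2 \in W)].

(* A cycle in the graph (W, F): distinct vertices v_0..v_{k-1} in W and
   distinct edges e_0..e_{k-1} in F, k >= 1, with e_i joining v_i and v_{i+1 mod k}.
   k = 1 is a self-loop, k = 2 is a pair of parallel edges. *)
Definition has_cycle (W : {set V}) (F : {set E}) : Prop :=
  exists (vs : seq V) (es : seq E),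
    [/\ 0 < size es, size vs = size es, uniq vs & uniq es] /\
    [/\ all (fun v => v \in W) vs, all (fun e => e \in F) es &
        all (fun t => joins t.1 t.2.1 t.2.2) (zip es (zip vs (rot 1 vs)))].

Definition is_fvs (W : {set V}) (F : {set E}) (X : {set V}) : Prop :=
  X \subset W /\ ~ has_cycle (W :\: X) F.

Definition fvs_is (W : {set V}) (F : {set E}) (k : nat) : Prop :=
  (exists X, is_fvs W F X /\ #|X| = k) /\ (forall X, is_fvs W F X -> k <= #|X|).

Definition is_min_fvs (W : {set V}) (F : {set E}) (X : {set V}) : Prop :=
  is_fvs W F X /\ fvs_is W F #|X|.

Definition adj (W : {set V}) (F : {set E}) : rel V :=
  fun x y => [&& x \in W, y \in W & [exists e in F, joins e x y]].

Definition comp (W : {set V}) (F : {set E}) (x : V) : {set V} :=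
  [set y in W | connect (adj W F) x y].

Definition components (W : {set V}) (F : {set E}) : {set {set V}} :=
  [set comp W F x | x in W].

Definition edges_in (F : {set E}) (K : {set V}) : {set E} :=
  [set e in F | ((ends e).1 \in K) && ((ends e).2 \in K)].

Definition certificate (C : {set V}) (z : nat) (W : {set V}) (F : {set E}) : Prop :=
  [/\ is_subgraph W F, is_min_fvs W F C &
      forall K, K \in components W F ->
        fvs_is K (edges_in F K) #|C :&: K| /\ #|C :&: K| <= z].

Definition num_trees_minus (W : {set V}) (F : {set E}) (C : {set V}) : nat :=
  #|components (W :\: C) F|.

End MultiGraph.

(* Main.v *)
Require Import Defs.
From mathcomp Require Import all_boot.
From mathcomp Require Import zify.
Set Implicit Arguments. Unset Strict Implicit. Unset Printing Implicit Defensive.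


Section Basics.
Variables (V E : finType) (ends : E -> V * V).
Local Notation jn := (joins ends).
Implicit Types (W : {set V}) (F : {set E}) (K : {set V}).

Lemma joinsC e x y : jn e x y = jn e y x.
Proof. by rewrite /joins orbC. Qed.

Lemma adjC W F : symmetric (adj ends W F).
Proof.
move=> x y; rewrite /adj; case: (x \in W); case: (y \in W) => //=.
by apply/existsP/existsP => -[e /andP[eF j]]; exists e; rewrite eF joinsC.
Qed.

Lemma adj_csym W F : connect_sym (adj ends W F).
Proof. exact: sym_connect_sym (adjC W F). Qed.

Definition inc e u := (u == (ends e).1) || (u == (ends e).2).

Lemma joins_inc e x y u : jn e x y -> inc e u = (u == x) || (u == y).
Proof.
rewrite /joins /inc; case: (ends e) => a b /=.
by case/orP => /eqP [-> ->] //; rewrite orbC.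
Qed.

Lemma joins_same e x y x' y' : jn e x y -> jn e x' y' ->
  (x = x' /\ y = y') \/ (x = y' /\ y = x').
Proof.
rewrite /joins; case: (ends e) => a b.
by do 2 case/orP => /eqP [-> ->]; auto.
Qed.

Lemma mem_comp W F x y : (y \in Defs.comp ends W F x) = (y \in W) && connect (adj ends W F) x y.
Proof. by rewrite inE. Qed.

Lemma comp_eq W F a x : x \in Defs.comp ends W F a -> Defs.comp ends W F a = Defs.comp ends W F x.
Proof.
rewrite mem_comp => /andP[xW cax]; apply/setP => y; rewrite !mem_comp.
case: (y \in W) => //=; apply/idP/idP => h.
  by apply: connect_trans h; rewrite adj_csym.
exact: connect_trans cax h.
Qed.

Lemma comp_self W F x : x \in W -> x \in Defs.comp ends W F x.
Proof. by move=> xW; rewrite mem_comp xW connect0. Qed.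

Lemma comp_subW W F x : Defs.comp ends W F x \subset W.
Proof. by apply/subsetP => y; rewrite mem_comp => /andP[]. Qed.

Lemma comp_disj W F a b x : x \in Defs.comp ends W F a -> x \in Defs.comp ends W F b ->
  Defs.comp ends W F a = Defs.comp ends W F b.
Proof. by move=> /comp_eq -> /comp_eq ->. Qed.

Lemma components_disj W F K1 K2 x : K1 \in components ends W F -> K2 \in components ends W F ->
  x \in K1 -> x \in K2 -> K1 = K2.
Proof.
by move=> /imsetP[a _ ->] /imsetP[b _ ->]; apply: comp_disj.
Qed.

Lemma connect_restrict (e e' : rel V) (S : pred V) x y :
  connect e x y -> x \in S -> (forall a b, a \in S -> e a b -> (b \in S) && e' a b) ->
  connect e' x y.
Proof.
move=> /connectP[p pth ->] xS h; elim: p x pth xS => [|b p IH] x /=.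
  by rewrite connect0.
case/andP => exb pth xS; have /andP[bS e'xb] := h _ _ xS exb.
by apply: connect_trans (connect1 e'xb) (IH _ pth bS).
Qed.

Lemma adj_mono W F (W2 : {set V}) (F2 : {set E}) : W \subset W2 -> F \subset F2 ->
  subrel (adj ends W F) (adj ends W2 F2).
Proof.
move=> sW sF x y /and3P[xW yW /existsP[e /andP[eF j]]].
rewrite /adj (subsetP sW _ xW) (subsetP sW _ yW) /=.
by apply/existsP; exists e; rewrite (subsetP sF _ eF).
Qed.

Lemma connect_mono W F (W2 : {set V}) (F2 : {set E}) : W \subset W2 -> F \subset F2 ->
  subrel (connect (adj ends W F)) (connect (adj ends W2 F2)).
Proof.
move=> sW sF; apply: connect_sub => x y h; apply: connect1; exact: adj_mono h.
Qed.

End Basics.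


Lemma nth_rot1 (T : Type) (s : seq T) x0 i : i < size s ->
  nth x0 (rot 1 s) i = nth x0 s (i.+1 %% size s).
Proof.
case: s => [|x s] //= lti; rewrite rot1_cons nth_rcons.
case: (ltnP i (size s)) => h.
  by rewrite modn_small //.
have -> : i = size s by lia.
by rewrite eqxx modnn.
Qed.

Section Cycles.
Variables (V E : finType) (ends : E -> V * V).
Local Notation jn := (joins ends).
Implicit Types (W : {set V}) (F : {set E}) (K : {set V}).

Definition cyc W F (vs : seq V) (es : seq E) : Prop :=
    [/\ 0 < size es, size vs = size es, uniq vs & uniq es] /\
    [/\ all (fun v => v \in W) vs, all (fun e => e \in F) es &
        all (fun t => jn t.1 t.2.1 t.2.2) (zip es (zip vs (rot 1 vs)))].

Lemma cyc_ne W F vs es : cyc W F vs es -> exists (v : V) (e : E), v \in vs /\ e \in es.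
Proof.
move=> [[pos sz _ _] _]; move: sz pos; case: vs => [|v ?]; case: es => [|e ?] //= _ _.
by exists v, e; rewrite !mem_head.
Qed.

Lemma cyc_mono W F vs es (W2 : {set V}) (F2 : {set E}) : cyc W F vs es ->
  W \subset W2 -> F \subset F2 -> cyc W2 F2 vs es.
Proof.
move=> [h [aW aF aJ]] sW sF; split => //; split => //.
  by apply: sub_all aW => v; apply: (subsetP sW).
by apply: sub_all aF => e; apply: (subsetP sF).
Qed.

Lemma has_cycleE W F : has_cycle ends W F <-> exists vs es, cyc W F vs es.
Proof. by []. Qed.

Lemma cyc_nth W F vs es v0 e0 : cyc W F vs es -> forall i, i < size es ->
  [/\ nth v0 vs i \in W, nth e0 es i \in F &
      jn (nth e0 es i) (nth v0 vs i) (nth v0 vs (i.+1 %% size es))].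
Proof.
move=> [[pos sz _ _] [aW aF aJ]] i lti.
split.
- by apply: (allP aW); apply: mem_nth; rewrite sz.
- by apply: (allP aF); apply: mem_nth.
have sz2 : size (zip vs (rot 1 vs)) = size es by rewrite size_zip size_rot minnn.
have := (all_nthP (e0, (v0, v0)) aJ i); rewrite size_zip sz2 minnn => /(_ lti).
rewrite nth_zip ?sz2 // nth_zip ?size_rot //= nth_rot1 ?sz //.
Qed.

Lemma mk_cyc W F vs es v0 e0 : 0 < size es -> size vs = size es -> uniq vs -> uniq es ->
  (forall i, i < size es ->
    [/\ nth v0 vs i \in W, nth e0 es i \in F &
      jn (nth e0 es i) (nth v0 vs i) (nth v0 vs (i.+1 %% size es))]) ->
  cyc W F vs es.
Proof.
move=> pos sz uv ue h; split; first by [].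
split.
- apply/(all_nthP v0) => i; rewrite sz => /h; by case.
- apply/(all_nthP e0) => i /h; by case.
have sz2 : size (zip vs (rot 1 vs)) = size es by rewrite size_zip size_rot minnn.
apply/(all_nthP (e0, (v0, v0))) => i; rewrite size_zip sz2 minnn => lti.
rewrite nth_zip ?sz2 // nth_zip ?size_rot //= nth_rot1 ?sz //.
by case: (h i lti).
Qed.

Lemma cyc_vs W F vs es (v0 v : V) : cyc W F vs es -> v \in vs -> exists2 i, i < size es & v = nth v0 vs i.
Proof.
move=> [[_ sz _ _] _] vin; exists (index v vs); first by rewrite -sz index_mem.
by rewrite nth_index.
Qed.


Lemma cyc_transfer W F vs es (W2 : {set V}) (F2 : {set E}) : cyc W F vs es ->
  (forall v, v \in vs -> v \in W2) ->
  (forall e x y, e \in F -> x \in W2 -> y \in W2 -> jn e x y -> e \in F2) ->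
  has_cycle ends W2 F2.
Proof.
move=> c hv he; exists vs, es.
have [[pos sz uv ue] _] := c.
have [v0 [e0 _]] := cyc_ne c.
change (cyc W2 F2 vs es); apply: (@mk_cyc W2 F2 vs es v0 e0) => // i lti; have [_ eF j] := cyc_nth v0 e0 c lti.
have m1 : nth v0 vs i \in W2 by apply: hv; apply: mem_nth; rewrite sz.
have m2 : nth v0 vs (i.+1 %% size es) \in W2.
  by apply: hv; apply: mem_nth; rewrite sz ltn_mod.
by split => //; apply: he j.
Qed.

Lemma has_cycle_mono W F (W2 : {set V}) (F2 : {set E}) : W \subset W2 -> F \subset F2 ->
  has_cycle ends W F -> has_cycle ends W2 F2.
Proof.
move=> sW sF [vs [es c]]; apply: (cyc_transfer c).
  by case: c => _ [aW _ _] v /(allP aW); apply: (subsetP sW).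
by move=> e x y eF _ _ _; apply: (subsetP sF).
Qed.

Lemma cyc_step W F vs es (v0 : V) i : cyc W F vs es -> i < size es ->
  adj ends W F (nth v0 vs i) (nth v0 vs (i.+1 %% size es)).
Proof.
move=> c lti; have [_ [e0 _]] := cyc_ne c.
have [vW eF j] := cyc_nth v0 e0 c lti.
have [[pos sz _ _] [aW _ _]] := c.
rewrite /adj vW /=; apply/andP; split.
  by apply: (allP aW); apply: mem_nth; rewrite sz ltn_mod.
by apply/existsP; exists (nth e0 es i); rewrite eF.
Qed.

Lemma cyc_connect W F vs es (v0 : V) i j : cyc W F vs es -> i < size es -> j < size es ->
  connect (adj ends W F) (nth v0 vs i) (nth v0 vs j).
Proof.
move=> c lti ltj.
have h : forall k, k < size es -> connect (adj ends W F) (nth v0 vs 0) (nth v0 vs k).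
  elim=> [|k IH] ltk; first by rewrite connect0.
  apply: connect_trans (IH (ltnW ltk)) _; apply: connect1.
  have := cyc_step v0 c (ltnW ltk); rewrite modn_small //.
apply: connect_trans (h _ ltj); rewrite adj_csym; exact: h.
Qed.

Lemma cyc_in_comp W F vs es K : cyc W F vs es -> K \in components ends W F ->
  (exists2 v, v \in vs & v \in K) -> forall v, v \in vs -> v \in K.
Proof.
move=> c /imsetP[a aW ->] [u uin uK] v vin.
have [[pos sz _ _] [aW' _ _]] := c.
have [i lti eu] := cyc_vs a c uin; have [j ltj ->] := cyc_vs a c vin.
move: uK; rewrite eu; rewrite !mem_comp => /andP[_ h]; rewrite (allP aW') ?mem_nth ?sz //=.
apply: connect_trans h _; idtac.
exact: (cyc_connect a c lti ltj).
Qed.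

End Cycles.


Section EdgeCycle.
Variables (V E : finType) (ends : E -> V * V).
Local Notation jn := (joins ends).
Implicit Types (W : {set V}) (F : {set E}) (K : {set V}).

Lemma cycle_of_edge W F e x y : e \in F -> x \in W -> y \in W -> jn e x y ->
  connect (adj ends W (F :\ e)) y x -> has_cycle ends W F.
Proof.
move=> eF xW yW j /connectP[p pth lx]; move: lx.
case: (shortenP pth) => p' pth' up' _ lx {pth p}.
pose g := fun ab : V * V => odflt e [pick f in F :\ e | jn f ab.1 ab.2].
have gP : forall a b, adj ends W (F :\ e) a b -> g (a, b) \in F :\ e /\ jn (g (a, b)) a b.
  move=> a b /and3P[_ _ /existsP[f0 /andP[f0F f0j]]]; rewrite /g /=.
  case: pickP => [f /andP[fF fj] | none] /=; first by [].
  by have := none f0; rewrite f0F f0j.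
pose s := y :: p'; pose m := size p'.
have stepP : forall i, i < m -> adj ends W (F :\ e) (nth y s i) (nth y p' i).
  by move=> i; apply/(pathP y): i; exact: pth'.
pose es := rcons (map g (zip s p')) e.
have szz : size (zip s p') = m by rewrite size_zip /s /=; apply/minn_idPr; exact: leqnSn.
have szes : size es = m.+1 by rewrite size_rcons size_map szz.
have nthg : forall i, i < m -> nth e es i = g (nth y s i, nth y p' i).
  move=> i lti; rewrite nth_rcons size_map szz lti (nth_map (y, y)) ?szz //.
  by rewrite nth_zip_cond szz lti.
exists s, es; apply: (@mk_cyc _ _ ends W F s es y e).
- by rewrite szes.
- by rewrite szes.
- exact: up'.
- rewrite rcons_uniq; apply/andP; split.
    apply/negP => /mapP[[a b] abin ea].
    have [i lti] : exists2 i, i < m & (a, b) = nth (y, y) (zip s p') i.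
      by exists (index (a, b) (zip s p')); rewrite ?nth_index // -szz index_mem.
    rewrite nth_zip_cond szz lti => -[ea' eb']; subst a b.
    have [] := gP _ _ (stepP i lti); rewrite -ea !inE eqxx //.
  apply/(uniqP e) => i k; rewrite !inE size_map szz => lti ltk.
  rewrite !(nth_map (y, y)) ?szz // !nth_zip_cond szz lti ltk /= => eqg.
  have [_ j1] := gP _ _ (stepP i lti); have [_ j2] := gP _ _ (stepP k ltk).
  rewrite eqg in j1.
  have us := up'; rewrite -/s in us.
  have eqs : forall a b, a < m.+1 -> b < m.+1 -> nth y s a = nth y s b -> a = b.
    by move=> a b la lb /eqP; rewrite nth_uniq //; move/eqP.
  have lk : k < m.+1 := ltnW ltk.
  have li : i < m.+1 := ltnW lti.
  case: (joins_same j2 j1) => [[h1 h2] | [h1 h2]].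
    by symmetry; apply: (eqs k i lk li h1).
  have e1 : k = i.+1 by apply: (eqs k i.+1 lk _ h1); rewrite ltnS.
  have e2 : k.+1 = i by apply: (eqs k.+1 i _ li h2); rewrite ltnS.
  clear -e1 e2; lia.
- move=> i; rewrite szes ltnS leq_eqVlt => /orP[/eqP -> | lti].
    rewrite nth_rcons size_map szz ltnn eqxx modnn /=.
    have xl : nth y s m = x by rewrite lx /s -[m]/((size s).-1) nth_last.
    by rewrite xl.
  rewrite nthg // modn_small ?ltnS //.
  have := stepP i lti => /[dup] st /gP[/setD1P[_ gF] gj].
  by case/and3P: st => -> _ _.
Qed.

Lemma cyc_transition n (P : nat -> bool) i0 j0 : i0 < n -> j0 < n -> P i0 -> ~~ P j0 ->
  exists2 a, a < n & P a && ~~ P (a.+1 %% n).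
Proof.
move=> li lj pi pj.
case: (boolP [exists a : 'I_n, P a && ~~ P (a.+1 %% n)]).
  by case/existsP => a h; exists a.
move/existsPn => h.
have all : forall k, P ((i0 + k) %% n).
  elim=> [|k IH]; first by rewrite addn0 modn_small.
  have := h (Ordinal (ltn_pmod (i0 + k) (leq_ltn_trans (leq0n _) li))).
  rewrite /= IH /= negbK addnS -addn1 modnDml addn1 //.
have e : i0 + (j0 + n - i0) = j0 + n by lia.
by have := all (j0 + n - i0); rewrite e modnDr modn_small // (negbTE pj).
Qed.

End EdgeCycle.


Section Reduce.
Variables (V E : finType) (ends : E -> V * V).
Local Notation jn := (joins ends).
Implicit Types (W : {set V}) (F : {set E}) (K : {set V}).

Lemma joins_in (S : {set V}) e x y : jn e x y -> x \in S -> y \in S ->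
  ((ends e).1 \in S) && ((ends e).2 \in S).
Proof.
rewrite /joins; case: (ends e) => a b /=.
by case/orP => /eqP [-> ->] -> ->.
Qed.

Lemma edges_inP F K e x y : e \in F -> jn e x y -> x \in K -> y \in K ->
  e \in edges_in ends F K.
Proof. by move=> eF j xK yK; rewrite inE eF (joins_in j xK yK). Qed.

Lemma edges_in_sub F K : edges_in ends F K \subset F.
Proof. by apply/subsetP => e; rewrite inE => /andP[]. Qed.

Lemma edges_inF F K e : e \in edges_in ends F K -> e \in F.
Proof. by rewrite inE => /andP[]. Qed.

Lemma cert_sub C z WH FH W' F' :
  certificate ends C z WH FH -> W' \subset WH -> F' \subset FH ->
  is_subgraph ends W' F' -> C \subset W' ->
  (forall X, is_fvs ends W' F' X -> #|C| <= #|X|) ->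
  certificate ends C z W' F'.
Proof.
move=> [subH [[CWH noC] fvsH] compH] sW sF sub' CW' minX.
have noC' : ~ has_cycle ends (W' :\: C) F'.
  by move=> /(has_cycle_mono (setSD C sW) sF).
have fvsC : is_fvs ends W' F' C by [].
split => //; first by split => //; split => //; exists C.
move=> K' K'in; case/imsetP: (K'in) => x xW' eK; subst K'.
set K := Defs.comp _ _ _ x in K'in *.
have K'W' : K \subset W' by exact: comp_subW.
split; last first.
  have xWH : x \in WH by apply: (subsetP sW).
  have KK : K \subset Defs.comp ends WH FH x.
    apply/subsetP => y; rewrite !mem_comp => /andP[yW cy].
    by rewrite (subsetP sW _ yW) (connect_mono sW sF cy).
  have := (compH _ (imset_f _ xWH)) => -[_ lz].
  by apply: leq_trans lz; apply: subset_leq_card; apply: setIS.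
split.
  exists (C :&: K); split => //; split; first exact: subsetIr.
  move=> /(has_cycle_mono _ (subset_trans (edges_in_sub _ _) sF)) h; apply: noC.
  apply: h; apply/subsetP => v; rewrite in_setD in_setI => /andP[vCK vK].
  by rewrite in_setD (subsetP sW _ (subsetP K'W' _ vK)) andbT; move: vCK; rewrite vK andbT.
move=> Y [YK noY]; rewrite leqNgt; apply/negP => ltY.
pose X := (C :\: K) :|: Y.
have XW : X \subset W'.
  by rewrite subUset (subset_trans (subsetDl _ _) CW') (subset_trans YK K'W').
have : is_fvs ends W' F' X.
  split => // -[vs [es c]].
  have [vin | vnin] := boolP [exists v in K, v \in vs].
    have allK : forall v, v \in vs -> v \in K.
      apply: (cyc_in_comp (cyc_mono c (subsetDl _ _) (subxx _)) K'in); case/existsP: vin => v /andP[vK vv].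
      by exists v.
    have [[_ _ _ _] [aW _ _]] := c.
    apply: noY; apply: (cyc_transfer c).
      move=> v vv; have := allP aW v vv; rewrite !in_setD in_setU allK // andbT.
      by case/andP => /norP[_ ->].
    move=> e a b eF; rewrite !in_setD => /andP[_ aK] /andP[_ bK] j.
    exact: edges_inP eF j aK bK.
  have [[_ _ _ _] [aW _ _]] := c.
  apply: noC; apply: (cyc_transfer c); last first.
    by move=> e a b eF _ _ _; apply: (subsetP sF).
  move=> v vv; have := allP aW v vv; rewrite !in_setD in_setU => /andP[/norP[vCK _] vW].
  rewrite (subsetP sW _ vW) andbT.
  have vK : v \notin K by apply/negP => vK; case/negP: vnin; apply/existsP; exists v; rewrite vK.
  by move: vCK; rewrite in_setD (negbTE vK).
move/minX; rewrite leqNgt => /negP; apply.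
apply: (leq_ltn_trans (leq_card_setU _ _)).
have := cardsID K C; move: ltY; clear; lia.
Qed.

End Reduce.


Section Counting.
Variable V : finType.

Lemma card_bigcup_le (I : finType) (A : {pred I}) (F : I -> {set V}) :
  #|\bigcup_(i in A) F i| <= \sum_(i in A) #|F i|.
Proof.
apply: (big_ind2 (fun (U : {set V}) n => #|U| <= n)).
- by rewrite cards0.
- move=> U1 n1 U2 n2 h1 h2; apply: leq_trans (leq_card_setU _ _) _; exact: leq_add.
- by [].
Qed.

Lemma card_capE (A K : {set V}) : #|A :&: K| = \sum_(x in A) (x \in K).
Proof.
rewrite -sum1_card big_mkcond /= [RHS]big_mkcond /=; apply: eq_bigr => x _.
by rewrite in_setI; case: (x \in A); case: (x \in K).
Qed.

Definition pdisj (P : {set {set V}}) :=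
  forall K1 K2 x, K1 \in P -> K2 \in P -> x \in K1 -> x \in K2 -> K1 = K2.

Lemma sum_cap_le (P : {set {set V}}) (A : {set V}) : pdisj P ->
  \sum_(K in P) #|A :&: K| <= #|A|.
Proof.
move=> dP; under eq_bigr do rewrite card_capE.
rewrite exchange_big /= -sum1_card; apply: leq_sum => x _.
case: (pickP [pred K in P | x \in K]) => [K0 /andP[K0P xK0] | none].
  rewrite (bigD1 K0) //= xK0 big1 // => K /andP[KP neK].
  by apply/eqP; rewrite eqb0; apply/negP => xK; case/eqP: neK; apply: dP xK xK0.
by rewrite big1 // => K KP; have := none K; rewrite /= KP /= => ->.
Qed.

Lemma sum_cap_ge (P : {set {set V}}) (A : {set V}) :
  (forall x, x \in A -> exists2 K, K \in P & x \in K) ->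
  #|A| <= \sum_(K in P) #|A :&: K|.
Proof.
move=> cov; under [X in _ <= X]eq_bigr do rewrite card_capE.
rewrite exchange_big /= -sum1_card; apply: leq_sum => x xA.
have [K0 K0P xK0] := cov x xA.
by rewrite (bigD1 K0) //= xK0.
Qed.

Lemma disj_count (S : {set {set V}}) (Y : {set V}) : pdisj S ->
  (forall T, T \in S -> exists x, x \in T :&: Y) -> #|S| <= #|Y|.
Proof.
move=> dS meet.
pose f := fun T : {set V} => [pick x in T :&: Y].
have fP : forall T, T \in S -> exists2 x, f T = Some x & x \in T :&: Y.
  move=> T TS; rewrite /f; case: pickP => [x xTY | none]; first by exists x.
  by have [x xTY] := meet T TS; have := none x; rewrite xTY.
have inj : {in S &, injective f}.
  move=> T1 T2 T1S T2S eqf; have [x fx xT1] := fP _ T1S; have [y fy yT2] := fP _ T2S.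
  move: eqf; rewrite fx fy => -[exy]; subst y.
  by move: xT1 yT2; rewrite !in_setI => /andP[xT1 _] /andP[xT2 _]; apply: dS xT1 xT2.
rewrite -(card_in_imset inj) -(card_imset Y (@Some_inj _)).
apply: subset_leq_card; apply/subsetP => o /imsetP[T TS ->].
have [x fx xTY] := fP _ TS; rewrite fx; apply: imset_f.
by move: xTY; rewrite in_setI => /andP[].
Qed.

End Counting.


Section Main.
Variables (V E : finType) (ends : E -> V * V) (C : {set V}) (z : nat)
  (WH : {set V}) (FH : {set E}).
Local Notation jn := (joins ends).
Implicit Types (W : {set V}) (F : {set E}) (K T X : {set V}) (S : {set {set V}}).

Definition Tr := components ends (WH :\: C) FH.
Definition ET c T := [set e in FH | [exists u in T, jn e c u]].
Definition LoopT c := [set T in Tr | 1 < #|ET c T|].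
Definition LinkT c d := [set T in Tr | (ET c T != set0) && (ET d T != set0)].
Definition sel n (S : {set {set V}}) := [set T in take n (enum S)].
Definition LP := [set p : V * V | [&& p.1 \in C, p.2 \in C, p.1 != p.2 & LinkT p.1 p.2 != set0]].
Definition LPl := [set p in LP | enum_rank p.1 < enum_rank p.2].
Definition Kept := (\bigcup_(c in C) sel z (LoopT c)) :|: (\bigcup_(p in LPl) sel z.+1 (LinkT p.1 p.2)).
Definition Wn := C :|: \bigcup_(T in Kept) T.
Definition Fn := edges_in ends FH Wn.

Lemma sel_sub n S : sel n S \subset S.
Proof. by apply/subsetP => T; rewrite inE => /mem_take; rewrite mem_enum. Qed.

Lemma sel_card n S : #|sel n S| <= n.
Proof.
rewrite cardsE; apply: leq_trans (card_size _) _; rewrite size_take.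
by case: ifP => // /negbT; rewrite -leqNgt.
Qed.

Lemma sel_full n S T : T \in S -> T \notin sel n S -> #|sel n S| = n.
Proof.
move=> TS; rewrite inE cardsE (card_uniqP _); last exact: take_uniq (enum_uniq _).
rewrite size_take; case: ifP => // /negbT; rewrite -leqNgt => h.
by rewrite take_oversize // mem_enum TS.
Qed.

Lemma LinkTC c d : LinkT c d = LinkT d c.
Proof. by apply/setP => T; rewrite !inE [X in _ && X]andbC. Qed.

Lemma Tr_sub T : T \in Tr -> T \subset WH :\: C.
Proof. by case/imsetP => a _ ->; exact: comp_subW. Qed.

Lemma Tr_disj : pdisj Tr.
Proof. by move=> K1 K2 x; apply: components_disj. Qed.

Lemma Tr_eq T x : T \in Tr -> x \in T -> T = Defs.comp ends (WH :\: C) FH x.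
Proof. by case/imsetP => a _ -> xT; apply: comp_eq. Qed.

Lemma Tr_conn T u y : T \in Tr -> u \in T -> y \in T ->
  connect (adj ends (WH :\: C) FH) u y.
Proof. by move=> TT uT; rewrite (Tr_eq TT uT) mem_comp => /andP[]. Qed.

Lemma Tr_step T a b : T \in Tr -> a \in T -> adj ends (WH :\: C) FH a b -> b \in T.
Proof.
move=> TT aT ab; rewrite (Tr_eq TT aT) mem_comp (connect1 ab) andbT.
by case/and3P: ab.
Qed.

Lemma ET_conn c T e y : T \in Tr -> c \in WH -> e \in ET c T -> y \in T ->
  connect (adj ends WH FH) c y.
Proof.
move=> TT cW; rewrite inE => /andP[eF /existsP[u /andP[uT j]]] yT.
have uW : u \in WH by have := subsetP (Tr_sub TT) _ uT; rewrite in_setD => /andP[].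
apply: (@connect_trans _ _ u).
  by apply: connect1; rewrite /adj cW uW /=; apply/existsP; exists e; rewrite eF.
apply: (connect_mono (subsetDl WH C) (subxx FH)); exact: Tr_conn uT yT.
Qed.

Lemma Tr_compK T K c : T \in Tr -> K \in components ends WH FH -> c \in K ->
  ET c T != set0 -> T \subset K.
Proof.
move=> TT /imsetP[a aW ->] cK /set0Pn[e eE]; apply/subsetP => y yT.
move: cK; rewrite !mem_comp => /andP[cW ac].
have yW : y \in WH by have := subsetP (Tr_sub TT) _ yT; rewrite in_setD => /andP[].
by rewrite yW (connect_trans ac (ET_conn TT cW eE yT)).
Qed.

Lemma Kept_Tr T : T \in Kept -> T \in Tr.
Proof.
rewrite in_setU => /orP[] /bigcupP[i _ /(subsetP (sel_sub _ _))]; rewrite inE => /andP[] //.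
Qed.

Lemma Kept_Wn T : T \in Kept -> T \subset Wn.
Proof.
move=> TK; apply/subsetP => x xT; rewrite in_setU; apply/orP; right.
by apply/bigcupP; exists T.
Qed.

Lemma C_Wn : C \subset Wn.
Proof. exact: subsetUl. Qed.

Lemma Wn_WH : C \subset WH -> Wn \subset WH.
Proof.
move=> CW; rewrite subUset CW /=; apply/bigcupsP => T /Kept_Tr /Tr_sub h.
exact: subset_trans h (subsetDl _ _).
Qed.

Lemma Fn_FH : Fn \subset FH.
Proof. exact: edges_in_sub. Qed.

Lemma Fn_sub : is_subgraph ends Wn Fn.
Proof. by apply/forall_inP => e; rewrite inE => /andP[]. Qed.


Lemma adjn_step X e f a b : f \in FH -> jn f a b -> a \in Wn -> b \in Wn ->
  a \notin X -> b \notin X -> f != e -> adj ends (Wn :\: X) (Fn :\ e) a b.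
Proof.
move=> fF j aW bW aX bX fe; rewrite /adj !in_setD aX bX aW bW /=.
by apply/existsP; exists f; rewrite in_setD1 fe (edges_inP fF j aW bW) j.
Qed.

Lemma kept_conn X e c T u w : T \in Kept -> (forall x, x \in T -> x \notin X) ->
  c \in C -> inc ends e c -> u \in T -> w \in T ->
  connect (adj ends (Wn :\: X) (Fn :\ e)) u w.
Proof.
move=> TK Xf cC ince uT wT; have TT := Kept_Tr TK.
apply: (@connect_restrict _ _ _ (mem T) _ _ (Tr_conn TT uT wT) uT).
move=> a b aT ab; have bT := Tr_step TT aT ab; rewrite inE bT /=.
case/and3P: ab => _ _ /existsP[f /andP[fF j]].
apply: (adjn_step fF j) => //; try exact: (subsetP (Kept_Wn TK)); try exact: Xf.
apply/eqP => fe; subst f; move: ince; rewrite (joins_inc _ j) => /orP[] /eqP ec; subst c.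
  by have := subsetP (Tr_sub TT) _ aT; rewrite in_setD cC.
by have := subsetP (Tr_sub TT) _ bT; rewrite in_setD cC.
Qed.

Lemma ET_P c T e : e \in ET c T -> e \in FH /\ exists2 u, u \in T & jn e c u.
Proof.
by rewrite inE => /andP[eF /existsP[u /andP[uT j]]]; split => //; exists u.
Qed.

Lemma Tr_notC T x : T \in Tr -> x \in T -> x \notin C.
Proof. by move=> TT xT; have := subsetP (Tr_sub TT) _ xT; rewrite in_setD => /andP[]. Qed.

Lemma inc_joins e x y : jn e x y -> inc ends e x.
Proof. by move=> j; rewrite (joins_inc _ j) eqxx. Qed.

Lemma loop_cycle X c T : ~ has_cycle ends (Wn :\: X) Fn -> c \in C -> c \notin X ->
  T \in Kept -> 1 < #|ET c T| -> (forall x, x \in T -> x \notin X) -> False.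
Proof.
move=> noX cC cX TK /card_gt1P[e1 [e2 [e1E e2E ne]]] Xf.
have [e1F [u uT j1]] := ET_P e1E; have [e2F [w wT j2]] := ET_P e2E.
have TT := Kept_Tr TK; have sW := subsetP (Kept_Wn TK).
have cW : c \in Wn by apply: (subsetP C_Wn).
apply: noX; apply: (@cycle_of_edge _ _ ends _ _ e1 c u).
- exact: edges_inP e1F j1 cW (sW _ uT).
- by rewrite in_setD cX cW.
- by rewrite in_setD Xf // sW.
- exact: j1.
apply: connect_trans (kept_conn TK Xf cC (inc_joins j1) uT wT) _.
apply: connect1; apply: (adjn_step e2F _ (sW _ wT) cW (Xf _ wT) cX).
  by rewrite joinsC.
by rewrite eq_sym.
Qed.

Lemma link_cycle X c d T1 T2 : ~ has_cycle ends (Wn :\: X) Fn -> c \in C -> c \notin X ->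
  d \in C -> d \notin X -> c != d ->
  T1 \in Kept -> T2 \in Kept -> T1 != T2 -> T1 \in LinkT c d -> T2 \in LinkT c d ->
  (forall x, x \in T1 -> x \notin X) -> (forall x, x \in T2 -> x \notin X) -> False.
Proof.
move=> noX cC cX dC dX cd T1K T2K T12 L1 L2 Xf1 Xf2.
have TT1 := Kept_Tr T1K; have TT2 := Kept_Tr T2K.
move: L1 L2; rewrite !inE TT1 TT2 /= => /andP[/set0Pn[e1 E1] /set0Pn[f1 F1]] /andP[/set0Pn[e2 E2] /set0Pn[f2 F2]].
have [e1F [u1 u1T j1]] := ET_P E1; have [f1F [w1 w1T k1]] := ET_P F1.
have [e2F [u2 u2T j2]] := ET_P E2; have [f2F [w2 w2T k2]] := ET_P F2.
have sW1 := subsetP (Kept_Wn T1K); have sW2 := subsetP (Kept_Wn T2K).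
have cW : c \in Wn by apply: (subsetP C_Wn).
have dW : d \in Wn by apply: (subsetP C_Wn).
have ince := inc_joins j1.
have notE : forall f x y, jn f x y -> x != c -> y != c -> f != e1.
  move=> f x y j xc yc; apply/eqP => fe; subst f.
  by move: ince; rewrite (joins_inc _ j) eq_sym (negbTE xc) eq_sym (negbTE yc).
have neC : forall T x, T \in Tr -> x \in T -> x != c.
  by move=> T x TT xT; apply/eqP => xc; subst x; have := Tr_notC TT xT; rewrite cC.
apply: noX; apply: (@cycle_of_edge _ _ ends _ _ e1 c u1).
- exact: edges_inP e1F j1 cW (sW1 _ u1T).
- by rewrite in_setD cX cW.
- by rewrite in_setD Xf1 // sW1.
- exact: j1.
apply: connect_trans (kept_conn T1K Xf1 cC ince u1T w1T) _.
apply: (@connect_trans _ _ d).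
  apply: connect1; apply: (adjn_step f1F _ (sW1 _ w1T) dW (Xf1 _ w1T) dX).
    by rewrite joinsC.
  by apply: (notE _ _ _ k1); rewrite ?(neC _ _ TT1 w1T) // eq_sym.
apply: (@connect_trans _ _ w2).
  apply: connect1; apply: (adjn_step f2F k2 dW (sW2 _ w2T) dX (Xf2 _ w2T)).
  by apply: (notE _ _ _ k2); rewrite ?(neC _ _ TT2 w2T) // eq_sym.
apply: connect_trans (kept_conn T2K Xf2 cC ince w2T u2T) _.
apply: connect1; apply: (adjn_step e2F _ (sW2 _ u2T) cW (Xf2 _ u2T) cX).
  by rewrite joinsC.
apply/eqP => ee; subst e2.
have : inc ends e1 u2 by rewrite (joins_inc _ j2) eqxx orbT.
rewrite (joins_inc _ j1) => /orP[/eqP u2c | /eqP u21].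
  by move: (neC _ _ TT2 u2T); rewrite u2c eqxx.
subst u2; case/negP: T12; apply/eqP; exact: Tr_disj TT1 TT2 u1T u2T.
Qed.

Lemma pdisj_sub S : S \subset Tr -> pdisj S.
Proof. by move=> sS K1 K2 x h1 h2; apply: Tr_disj; apply: (subsetP sS). Qed.

Lemma sel_Kept_loop c T : c \in C -> T \in sel z (LoopT c) -> T \in Kept.
Proof. by move=> cC TS; rewrite in_setU; apply/orP; left; apply/bigcupP; exists c. Qed.

Lemma sel_Kept_link p T : p \in LPl -> T \in sel z.+1 (LinkT p.1 p.2) -> T \in Kept.
Proof. by move=> pL TS; rewrite in_setU; apply/orP; right; apply/bigcupP; exists p. Qed.

Lemma LPl_mem x y : x \in C -> y \in C -> x != y -> LinkT x y != set0 ->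
  enum_rank x < enum_rank y -> (x, y) \in LPl.
Proof.
move=> xC yC nxy ne lt; rewrite /LPl /LP in_set in_set.
by apply/andP; split => //; apply/and4P; split.
Qed.

Lemma minWn X : certificate ends C z WH FH -> is_fvs ends Wn Fn X -> #|C| <= #|X|.
Proof.
case=> subH [[CWH noC] fvsH] compH [XW noX]; rewrite leqNgt; apply/negP => ltX.
have dP : pdisj (components ends WH FH) by move=> K1 K2 x; apply: components_disj.
have [K KP ltK] : exists2 K, K \in components ends WH FH & #|X :&: K| < #|C :&: K|.
  case: (boolP [exists K in components ends WH FH, #|X :&: K| < #|C :&: K|]).
    by case/exists_inP => K KP h; exists K.
  move/exists_inPn => h; move: ltX; rewrite ltnNge => /negP; case.
  apply: leq_trans (sum_cap_ge (P := components ends WH FH) _) _.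
    move=> x xC; have xW := subsetP CWH _ xC.
    by exists (Defs.comp ends WH FH x); [apply: imset_f | apply: comp_self].
  apply: leq_trans _ (sum_cap_le X dP); apply: leq_sum => K KP'.
  by rewrite leqNgt h.
have [[_ minK] zK] := compH K KP.
have nf : ~ is_fvs ends K (edges_in ends FH K) (X :&: K).
  by move/minK; rewrite leqNgt ltK.
have KWH : K \subset WH by case/imsetP: KP => a _ ->; exact: comp_subW.
have hc : ~ ~ has_cycle ends (K :\: (X :&: K)) (edges_in ends FH K).
  by move=> h; apply: nf; split => //; exact: subsetIr.
apply: hc => -[vs [es c]].
have [[pos sz uv ue] [aW aF aJ]] := c.
have vKX : forall v, v \in vs -> (v \in K) && (v \notin X).
  move=> v vv; have := allP aW v vv; rewrite !in_setD in_setI.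
  by case: (v \in K); rewrite ?andbT ?andbF.
case: (boolP (all (fun v => v \in Wn) vs)) => [allW | /allPn[v vv vW]].
  apply: noX; apply: (cyc_transfer c).
    by move=> v vv; rewrite in_setD (allP allW v vv); case/andP: (vKX v vv) => _ ->.
  move=> e x y eF; rewrite !in_setD => /andP[_ xW] /andP[_ yW] j.
  have eFH : e \in FH by move: eF; rewrite inE => /andP[].
  exact: edges_inP eFH j xW yW.
have /andP[vK vX] := vKX v vv.
have vC : v \notin C by apply: contra vW; apply: (subsetP C_Wn).
have vWC : v \in WH :\: C by rewrite in_setD vC (subsetP KWH _ vK).
pose T := Defs.comp ends (WH :\: C) FH v.
have TT : T \in Tr by apply: imset_f.
have vT : v \in T by apply: comp_self.
have TnK : T \notin Kept by apply: contra vW => TK; apply: (subsetP (Kept_Wn TK)).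
case: (boolP (all (fun v => v \in T) vs)) => [allT | /allPn[w wv wT]].
  apply: noC; apply: (cyc_transfer c).
    by move=> u uu; apply: (subsetP (Tr_sub TT)); apply: (allP allT).
  by move=> e x y eF _ _ _; apply: edges_inF eF.
have [_ [e0 _]] := cyc_ne c.
have [i0 li0 ei0] := cyc_vs v c vv; have [j0 lj0 ej0] := cyc_vs v c wv.
pose P := fun i => nth v vs i \in T.
have [a la /andP[Pa nPa]] : exists2 a, a < size es & P a && ~~ P (a.+1 %% size es).
  by apply: (@cyc_transition _ P i0 j0 li0 lj0); rewrite /P -?ei0 -?ej0.
have [b lb /andP[nPb]] : exists2 b, b < size es & ~~ P b && ~~ ~~ P (b.+1 %% size es).
  by apply: (@cyc_transition _ (fun i => ~~ P i) j0 i0 lj0 li0); rewrite /P -?ei0 -?ej0 ?negbK.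
rewrite negbK => Pb.
rewrite /P in Pa nPa nPb Pb.
have [_ eaF ja] := cyc_nth v e0 c la; have [_ ebF jb] := cyc_nth v e0 c lb.
have eaFH := edges_inF eaF; have ebFH := edges_inF ebF.
set c1 := nth v vs (a.+1 %% size es) in ja nPa.
set c2 := nth v vs b in jb nPb.
have memv : forall i, i < size es -> nth v vs i \in vs by move=> i li; rewrite mem_nth // sz.
have c1v : c1 \in vs by apply: memv; rewrite ltn_mod (leq_ltn_trans (leq0n _) la).
have c2v : c2 \in vs by apply: memv.
have inC : forall x y f, x \in T -> f \in FH -> jn f x y -> y \in vs -> y \notin T -> y \in C.
  move=> x y f xT fF j yv yT; apply/negPn/negP => yC; case/negP: yT.
  apply: (Tr_step TT xT); rewrite /adj (subsetP (Tr_sub TT) _ xT) in_setD yC.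
  have /andP[yK _] := vKX y yv; rewrite (subsetP KWH _ yK) /=.
  by apply/existsP; exists f; rewrite fF j.
have c1C : c1 \in C by apply: (inC _ _ _ Pa eaFH ja c1v nPa).
have c2C : c2 \in C by apply: (inC _ _ _ Pb ebFH _ c2v nPb); rewrite joinsC.
have /andP[c1K c1X] := vKX c1 c1v.
have /andP[c2K c2X] := vKX c2 c2v.
have eaE : nth e0 es a \in ET c1 T.
  by rewrite inE eaFH; apply/existsP; exists (nth v vs a); rewrite Pa joinsC.
have ebE : nth e0 es b \in ET c2 T.
  by rewrite inE ebFH; apply/existsP; exists (nth v vs (b.+1 %% size es)); rewrite Pb.
have neab : nth e0 es a != nth e0 es b.
  rewrite nth_uniq //; apply/eqP => eab; subst b.
  by move: nPb; rewrite Pa.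
have zle : z <= #|X :&: K| -> False.
  by move=> h; move: (leq_trans (leq_ltn_trans h ltK) zK); rewrite ltnn.
have meets : forall T', T' \in Tr -> ET c1 T' != set0 ->
    [exists x in T', x \in X] -> exists x, x \in T' :&: (X :&: K).
  move=> T' TT' ne /exists_inP[x xT' xX]; exists x.
  by rewrite !in_setI xT' xX (subsetP (Tr_compK TT' KP c1K ne) _ xT').
have Xfree : forall T', ~~ [exists x in T', x \in X] -> forall x, x \in T' -> x \notin X.
  by move=> T' /exists_inPn h x xT; apply: h.
case: (eqVneq c1 c2) => [e12 | n12].
  rewrite -e12 in ebE.
  have loop : 1 < #|ET c1 T| by apply/card_gt1P; exists (nth e0 es a), (nth e0 es b).
  have TL : T \in LoopT c1 by rewrite inE TT loop.
  have Tsel : T \notin sel z (LoopT c1) by apply: contra TnK; apply: sel_Kept_loop.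
  apply: zle; rewrite -(sel_full TL Tsel); apply: disj_count.
    apply: pdisj_sub; apply: subset_trans (sel_sub _ _) _.
    by apply/subsetP => T'; rewrite inE => /andP[].
  move=> T' T'S; have := subsetP (sel_sub _ _) _ T'S; rewrite inE => /andP[TT' l1].
  have ne : ET c1 T' != set0 by rewrite -card_gt0; apply: leq_trans l1.
  case: (boolP [exists x in T', x \in X]) => [ex | nex]; first exact: meets.
  by case: (loop_cycle noX c1C c1X (sel_Kept_loop c1C T'S) l1 (Xfree _ nex)).
have TL : T \in LinkT c1 c2.
  by rewrite inE TT /=; apply/andP; split; apply/set0Pn; [exists (nth e0 es a) | exists (nth e0 es b)].
have [p pL eLp] : exists2 p, p \in LPl & LinkT p.1 p.2 = LinkT c1 c2.
  have ne : LinkT c1 c2 != set0 by apply/set0Pn; exists T.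
  case: (ltngtP (enum_rank c1) (enum_rank c2)) => h.
  - by exists (c1, c2) => //; apply: LPl_mem.
  - exists (c2, c1); last by rewrite LinkTC.
    by apply: LPl_mem => //; [rewrite eq_sym | rewrite LinkTC].
  - by have := enum_rank_inj (ord_inj h) => e12; rewrite e12 eqxx in n12.
set S := sel z.+1 (LinkT p.1 p.2).
have Tsel : T \notin S by apply: contra TnK; apply: sel_Kept_link.
have full : #|S| = z.+1 by apply: sel_full Tsel; rewrite eLp.
pose Q := [set T' : {set V} | [exists x in T', x \in X]].
have SL : forall T', T' \in S -> T' \in Tr /\ T' \in LinkT c1 c2.
  move=> T' T'S; have := subsetP (sel_sub _ _) _ T'S; rewrite eLp => h.
  by split => //; move: h; rewrite inE => /andP[].
have N1 : #|S :\: Q| <= 1.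
  apply/card_le1_eqP => T1 T2; rewrite !in_setD [T1 \in Q]in_set [T2 \in Q]in_set => /andP[n1 S1] /andP[n2 S2].
  apply/eqP; apply/negPn/negP => T12.
  have [TT1 L1] := SL _ S1; have [TT2 L2] := SL _ S2.
  exact: (link_cycle noX c1C c1X c2C c2X n12 (sel_Kept_link pL S2) (sel_Kept_link pL S1)
            T12 L2 L1 (Xfree _ n2) (Xfree _ n1)).
have M1 : #|S :&: Q| <= #|X :&: K|.
  apply: disj_count.
    apply: pdisj_sub; apply/subsetP => T'; rewrite in_setI => /andP[/SL[] //].
  move=> T'; rewrite in_setI [T' \in Q]in_set => /andP[/SL[TT' L'] ex].
  apply: meets => //; by move: L'; rewrite inE => /andP[_ /andP[]].
apply: zle; have e := cardsID Q S; rewrite full in e.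
have : z.+1 <= #|X :&: K| + 1 by rewrite -e; exact: leq_add M1 N1.
by rewrite addn1 ltnS.
Qed.

Lemma trees_le : C \subset WH -> num_trees_minus ends Wn Fn C <= #|Kept|.
Proof.
move=> CWH; apply: subset_leq_card; apply/subsetP => K' /imsetP[x xWC ->].
move: (xWC); rewrite in_setD => /andP[xC xW].
move: xW; rewrite in_setU (negbTE xC) /= => /bigcupP[T TK xT].
have TT := Kept_Tr TK.
suff -> : Defs.comp ends (Wn :\: C) Fn x = T by [].
apply/setP => y; rewrite mem_comp; apply/idP/idP.
  case/andP => yW cxy.
  have cxy' := connect_mono (setSD C (Wn_WH CWH)) Fn_FH cxy.
  rewrite (Tr_eq TT xT) mem_comp cxy' andbT.
  by move: yW; rewrite !in_setD => /andP[-> /(subsetP (Wn_WH CWH)) ->].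
move=> yT; rewrite in_setD (Tr_notC TT yT) (subsetP (Kept_Wn TK) _ yT) /=.
apply: (@connect_restrict _ _ _ (mem T) _ _ (Tr_conn TT xT yT) xT).
move=> a b aT ab; have bT := Tr_step TT aT ab; rewrite inE bT /=.
case/and3P: ab => _ _ /existsP[f /andP[fF j]].
have aW := subsetP (Kept_Wn TK) _ aT; have bW := subsetP (Kept_Wn TK) _ bT.
rewrite /adj !in_setD (Tr_notC TT aT) (Tr_notC TT bT) aW bW /=.
by apply/existsP; exists f; rewrite j andbT; apply: edges_inP fF j aW bW.
Qed.

Lemma Kept_le : #|Kept| <= #|C| * z + #|LPl| * z.+1.
Proof.
apply: leq_trans (leq_card_setU _ _) _; apply: leq_add.
  apply: leq_trans (card_bigcup_le _ _) _; rewrite -sum_nat_const.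
  by apply: leq_sum => c _; apply: sel_card.
apply: leq_trans (card_bigcup_le _ _) _; rewrite -sum_nat_const.
by apply: leq_sum => p _; apply: sel_card.
Qed.

Lemma LP_sym x y : (x, y) \in LP -> (y, x) \in LP.
Proof.
rewrite /LP !in_set => /and4P[xC yC nxy ne]; apply/and4P; split => //.
  by rewrite eq_sym.
by rewrite LinkTC.
Qed.

Lemma LPl_le : 2 * #|LPl| <= #|LP|.
Proof.
pose sw := fun p : V * V => (p.2, p.1).
have swi : injective sw by move=> [a b] [c d] [-> ->].
have dis : LPl :&: sw @: LPl = set0.
  apply/setP => q; rewrite in_setI in_set0; apply/negP => /andP[qL /imsetP[p pL eq]].
  subst q; move: qL pL; rewrite /LPl !in_set => /andP[_ h1] /andP[_ h2].
  by move: (ltn_trans h1 h2); rewrite ltnn.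
have sub : LPl :|: sw @: LPl \subset LP.
  rewrite subUset; apply/andP; split.
    by apply/subsetP => p; rewrite in_set => /andP[].
  apply/subsetP => q /imsetP[[a b] pL ->]; apply: LP_sym.
  by move: pL; rewrite in_set => /andP[].
have := subset_leq_card sub; have := cardsUI LPl (sw @: LPl).
by rewrite dis cards0 addn0 (card_imset _ swi) addnn -mul2n => ->.
Qed.

Lemma LP_le : certificate ends C z WH FH -> #|LP| <= #|C| * z.-1.
Proof.
case=> _ [[CWH _] _] compH.
pose N := fun c => (C :&: Defs.comp ends WH FH c) :\ c.
have sub : LP \subset \bigcup_(c in C) [set (c, d) | d in N c].
  apply/subsetP => -[c d]; rewrite /LP in_set /= => /and4P[cC dC ncd /set0Pn[T]].
  rewrite in_set => /andP[TT /andP[/set0Pn[e eE] /set0Pn[f fE]]].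
  apply/bigcupP; exists c => //; apply: imset_f.
  rewrite in_setD1 eq_sym ncd in_setI dC mem_comp (subsetP CWH _ dC) /=.
  have [_ [y yT _]] := ET_P eE.
  apply: connect_trans (ET_conn TT (subsetP CWH _ cC) eE yT) _.
  by rewrite adj_csym; apply: ET_conn TT (subsetP CWH _ dC) fE yT.
apply: leq_trans (subset_leq_card sub) _.
apply: leq_trans (card_bigcup_le _ _) _; rewrite -sum_nat_const.
apply: leq_sum => c cC.
rewrite card_imset; last by move=> a b [].
have cW := subsetP CWH _ cC.
have [_ lz] := compH _ (imset_f (fun x => Defs.comp ends WH FH x) cW).
have := cardsD1 c (C :&: Defs.comp ends WH FH c).
rewrite in_setI cC comp_self //= add1n => e.
by move: lz; rewrite e => lz; rewrite -ltnS; apply: leq_trans lz _; exact: leqSpred.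
Qed.

End Main.



Theorem lemma13 (V E : finType) (ends : E -> V * V) (C : {set V}) (z : nat)
    (WH : {set V}) (FH : {set E}) :
  certificate ends C z WH FH ->
  exists (W' : {set V}) (F' : {set E}),
    [/\ W' \subset WH, F' \subset FH, certificate ends C z W' F' &
        2 * num_trees_minus ends W' F' C + #|C| <= #|C| * (z ^ 2 + 2 * z)].
Proof.
move=> Hc; have [_ [[CWH _] _] compH] := Hc.
exists (Wn ends C z WH FH), (Fn ends C z WH FH); split.
- exact: Wn_WH.
- exact: Fn_FH.
- apply: (cert_sub Hc (Wn_WH ends z FH CWH) (Fn_FH ends C z WH FH) (Fn_sub ends C z WH FH) (C_Wn ends C z WH FH)).
  by move=> X h; apply: minWn h.
have t1 := trees_le ends z FH CWH.
have t2 := Kept_le ends C z WH FH.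
have t3 := LPl_le ends C WH FH.
have t4 := LP_le Hc.
move: t1 t2 t3 t4.
set t := num_trees_minus _ _ _ _; set L := #|LPl _ _ _ _|; set K := #|Kept _ _ _ _ _|.
set P := #|LP _ _ _ _|.
have z0 : z = 0 -> #|C| = 0.
  move=> ez; apply/eqP; rewrite cards_eq0; apply/eqP/setP => c; rewrite in_set0.
  apply/negP => cC; have cW := subsetP CWH _ cC.
  have [_ lz] := compH _ (imset_f (fun x => Defs.comp ends WH FH x) cW).
  move: lz; rewrite ez leqn0 cards_eq0 => /eqP /setP /(_ c).
  by rewrite in_setI cC comp_self // in_set0.
have [C0 | zpos] : #|C| = 0 \/ 0 < z.
    by case: (posnP z) => [/z0 | ]; [left | right].
  rewrite C0 !mul0n => h1 h2 h3 h4.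
  have L0 : L = 0 by move: h3 h4; clear; lia.
  by move: h2; rewrite L0 mul0n => h2; move: h1 h2; clear; lia.
move=> h1 h2 h3 h4.
have ez : z = z.-1.+1 by rewrite prednK.
move: h2 h4; rewrite ez /=; move: (z.-1) => k h2 h4.
have h5 : 2 * L * k.+2 <= #|C| * k * k.+2.
  by apply: leq_mul => //; apply: leq_trans h3 _.
move: h1 h2 h5; clear; nia.
Qed.
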